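(* Let $n\ge 3$ be an integer. (i) There exist a function $f:\mathbb{R}\to\mathbb{R}$ and a point $x$ such that the Peano derivative $f_{(n-1)}(x)$ exists and the $n$th symmetric Riemann derivative $D_n^sf(x)$ exists, but the Peano derivative $f_{(n)}(x)$ does not exist. (ii) There exist a function $f:\mathbb{R}\to\mathbb{R}$ and a point $x$ such that $f_{(2)}(x)$ exists and the third forward Riemann derivative $D_3f(x)$ exists, but $f_{(3)}(x)$ does not exist. *)

(* Defs.v *)
From Stdlib Require Import Reals Factorial Binomial.
Open Scope R_scope.

Definition peano_exists (k : nat) (f : R -> R) (x : R) : Prop :=
  exists a : nat -> R, a 0%nat = f x /\
    forall eps : R, 0 < eps -> exists delta : R, 0 < delta /\
      forall h : R, h <> 0 -> Rabs h < delta ->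
        Rabs (f (x + h) - sum_f_R0 (fun j => a j * h ^ j / INR (fact j)) k)
          <= eps * Rabs h ^ k.

Definition lim0_exists (g : R -> R) : Prop :=
  exists L : R, forall eps : R, 0 < eps -> exists delta : R, 0 < delta /\
    forall h : R, h <> 0 -> Rabs h < delta -> Rabs (g h - L) < eps.

Definition sym_diff (n : nat) (f : R -> R) (x h : R) : R :=
  sum_f_R0 (fun k => (-1) ^ k * C n k * f (x + (INR n / 2 - INR k) * h)) n.

Definition fwd_diff (n : nat) (f : R -> R) (x h : R) : R :=
  sum_f_R0 (fun k => (-1) ^ (n - k) * C n k * f (x + INR k * h)) n.

Definition sym_riemann_exists (n : nat) (f : R -> R) (x : R) : Prop :=
  lim0_exists (fun h => sym_diff n f x h / h ^ n).

Definition riemann_exists (n : nat) (f : R -> R) (x : R) : Prop :=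
  lim0_exists (fun h => fwd_diff n f x h / h ^ n).

(* Main.v *)
Require Import Defs.
From Stdlib Require Import Reals Lra Lia Factorial Binomial ClassicalEpsilon.
Open Scope R_scope.

Lemma poly_small : forall n (b : nat -> R) C d, 0 < d ->
  (forall h, h <> 0 -> Rabs h < d ->
     Rabs (sum_f_R0 (fun j => b j * h ^ j) n) <= C * Rabs h ^ n) ->
  forall h, sum_f_R0 (fun j => b j * h ^ j) n = b n * h ^ n.
Proof.
  induction n as [|n IH]; intros b C d dpos H h.
  - reflexivity.
  - set (C' := Rabs C + Rabs (b (S n))).
    assert (C'pos : 0 <= C') by (unfold C'; pose proof (Rabs_pos C); pose proof (Rabs_pos (b (S n))); lra).
    assert (Hn : forall h, h <> 0 -> Rabs h < Rmin d 1 ->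
       Rabs (sum_f_R0 (fun j => b j * h ^ j) n) <= C' * Rabs h ^ (S n)).
    { intros y hy Hy.
      assert (Hy1 : Rabs y < d) by (pose proof (Rmin_l d 1); lra).
      specialize (H y hy Hy1). simpl sum_f_R0 in H. rewrite tech_pow_Rmult in H.
      set (s := sum_f_R0 (fun j => b j * y ^ j) n) in *.
      replace s with ((s + b (S n) * y ^ S n) - b (S n) * y ^ S n) by ring.
      unfold Rminus. eapply Rle_trans. apply Rabs_triang.
      rewrite Rabs_Ropp, Rabs_mult, <- RPow_abs.
      assert (0 <= Rabs y ^ S n) by (apply pow_le; apply Rabs_pos).
      assert (C * Rabs y ^ S n <= Rabs C * Rabs y ^ S n).
      { apply Rmult_le_compat_r; [lra| apply RRle_abs]. }
      unfold C'. lra. }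
    assert (Hn' : forall h, h <> 0 -> Rabs h < Rmin d 1 ->
       Rabs (sum_f_R0 (fun j => b j * h ^ j) n) <= C' * Rabs h ^ n).
    { intros y hy Hy. eapply Rle_trans. apply Hn; auto.
      simpl. assert (Rabs y < 1) by (pose proof (Rmin_r d 1); lra).
      assert (0 <= Rabs y ^ n) by (apply pow_le; apply Rabs_pos).
      assert (0 <= C' * Rabs y ^ n) by (apply Rmult_le_pos; lra).
      assert (0 <= Rabs y) by apply Rabs_pos. nra. }
    assert (dpos' : 0 < Rmin d 1) by (apply Rmin_pos; lra).
    pose proof (IH b C' (Rmin d 1) dpos' Hn') as E.
    assert (bn0 : b n = 0).
    { destruct (Req_dec (b n) 0) as [e|ne]; auto. exfalso.
      set (y := Rmin (Rmin d 1 / 2) (Rabs (b n) / (2 * (C' + 1)))).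
      pose proof (Rabs_pos_lt _ ne) as bpos.
      assert (ypos : 0 < y).
      { unfold y. apply Rmin_pos. lra. apply Rdiv_lt_0_compat; lra. }
      assert (y <= Rmin d 1 / 2) by apply Rmin_l.
      assert (yd : y < Rmin d 1) by lra.
      assert (yb : y <= Rabs (b n) / (2 * (C' + 1))) by apply Rmin_r.
      assert (Hy := Hn y ltac:(lra) ltac:(rewrite Rabs_pos_eq; lra)).
      rewrite E, Rabs_mult, <- RPow_abs, (Rabs_pos_eq y) in Hy by lra.
      assert (yn : 0 < y ^ n) by (apply pow_lt; lra).
      simpl in Hy.
      assert (Rabs (b n) <= C' * y).
      { apply (Rmult_le_reg_r (y ^ n)); auto. nra. }
      assert (C' * y <= C' * (Rabs (b n) / (2 * (C' + 1)))) by (apply Rmult_le_compat_l; lra).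
      assert (C' * (Rabs (b n) / (2 * (C' + 1))) < Rabs (b n)).
      { apply (Rmult_lt_reg_r (2 * (C'+1))). lra. field_simplify; nra. }
      lra. }
    simpl. rewrite E, bn0. ring.
Qed.

Lemma peano_fail n f x K c1 c2 : c1 <> c2 ->
  (forall h, h <> 0 -> Rabs h < 1 -> Rabs (f (x + h)) <= K * Rabs h ^ n) ->
  (forall d, 0 < d -> exists h, h <> 0 /\ Rabs h < d /\ f (x + h) = c1 * h ^ n) ->
  (forall d, 0 < d -> exists h, h <> 0 /\ Rabs h < d /\ f (x + h) = c2 * h ^ n) ->
  ~ peano_exists n f x.
Proof.
  intros cne HK H1 H2 [a [_ Ha]].
  assert (cpos : 0 < Rabs (c1 - c2)) by (apply Rabs_pos_lt; lra).
  set (eps := Rabs (c1 - c2) / 4).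
  destruct (Ha eps ltac:(unfold eps; lra)) as [d [dpos Hd]].
  set (b := fun j => a j / INR (fact j)).
  assert (Hs : forall h, sum_f_R0 (fun j => a j * h ^ j / INR (fact j)) n
                        = sum_f_R0 (fun j => b j * h ^ j) n).
  { intro h. apply sum_eq. intros i _. unfold b, Rdiv. ring. }
  assert (d'pos : 0 < Rmin d 1) by (apply Rmin_pos; lra).
  assert (P : forall h, h <> 0 -> Rabs h < Rmin d 1 ->
     Rabs (sum_f_R0 (fun j => b j * h ^ j) n) <= (K + eps) * Rabs h ^ n).
  { intros h hn hd.
    assert (h1 : Rabs h < d) by (pose proof (Rmin_l d 1); lra).
    assert (h2 : Rabs h < 1) by (pose proof (Rmin_r d 1); lra).
    specialize (Hd h hn h1). specialize (HK h hn h2). rewrite Hs in Hd.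
    set (p := sum_f_R0 (fun j => b j * h ^ j) n) in *.
    replace p with (f (x + h) + - (f (x + h) - p)) by ring.
    eapply Rle_trans. apply Rabs_triang. rewrite Rabs_Ropp. lra. }
  pose proof (poly_small n b _ _ d'pos P) as E.
  assert (key : forall c, (forall d, 0 < d -> exists h, h <> 0 /\ Rabs h < d /\ f (x + h) = c * h ^ n) ->
             Rabs (c - b n) <= eps).
  { intros c Hc. destruct (Hc _ d'pos) as [h [hn [hd hf]]].
    assert (h1 : Rabs h < d) by (pose proof (Rmin_l d 1); lra).
    specialize (Hd h hn h1). rewrite Hs, E, hf in Hd.
    replace (c * h ^ n - b n * h ^ n) with ((c - b n) * h ^ n) in Hd by ring.
    rewrite Rabs_mult, <- RPow_abs in Hd.
    assert (0 < Rabs h ^ n) by (apply pow_lt; apply Rabs_pos_lt; auto).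
    apply (Rmult_le_reg_r (Rabs h ^ n)); auto. }
  pose proof (key _ H1). pose proof (key _ H2).
  assert (Rabs (c1 - c2) <= Rabs (c1 - b n) + Rabs (c2 - b n)).
  { replace (c1 - c2) with ((c1 - b n) + - (c2 - b n)) by ring.
    eapply Rle_trans. apply Rabs_triang. rewrite Rabs_Ropp. lra. }
  unfold eps in *. lra.
Qed.

Lemma sum_rev : forall n g, sum_f_R0 g n = sum_f_R0 (fun k => g (n - k)%nat) n.
Proof.
  induction n as [|n IH]; intro g.
  - reflexivity.
  - rewrite (decomp_sum (fun k => g (S n - k)%nat)) by lia. simpl pred.
    simpl sum_f_R0 at 1.
    replace (S n - 0)%nat with (S n) by lia.
    rewrite (sum_eq (fun i => g (S n - S i)%nat) (fun i => g (n - i)%nat)) by (intros; f_equal).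
    rewrite <- IH. ring.
Qed.

Lemma sum_zero_of_anti n g : (forall k, (k <= n)%nat -> g (n - k)%nat = - g k) ->
  sum_f_R0 g n = 0.
Proof.
  intro H. assert (E : sum_f_R0 g n = - sum_f_R0 g n).
  { rewrite sum_rev at 1. rewrite (sum_eq _ (fun k => g k * -1)).
    - rewrite <- scal_sum. ring.
    - intros i hi. rewrite H by auto. ring. }
  lra.
Qed.

Definition f1 (n : nat) (y : R) : R := y ^ (n - 1) * Rabs y.

Lemma m1_sq k : (-1) ^ k * (-1) ^ k = 1.
Proof. rewrite <- pow_add. replace (k + k)%nat with (2 * k)%nat by lia.
  rewrite pow_mult. replace ((-1)^2) with 1 by ring. apply pow1. Qed.

Lemma f1_opp n y : (1 <= n)%nat -> f1 n (- y) = - ((-1) ^ n * f1 n y).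
Proof.
  intro hn. unfold f1. rewrite Rabs_Ropp.
  replace (- y) with ((-1) * y) by ring. rewrite Rpow_mult_distr.
  assert (E : (-1) ^ n = -1 * (-1) ^ (n - 1)).
  { replace n with (S (n - 1)) at 1 by lia. reflexivity. }
  rewrite E. ring.
Qed.

Lemma sym_f1 n h : (1 <= n)%nat -> sym_diff n (f1 n) 0 h = 0.
Proof.
  intro hn. unfold sym_diff. apply sum_zero_of_anti. intros k hk.
  rewrite <- pascal_step1 by auto. rewrite minus_INR by auto.
  replace (0 + (INR n / 2 - (INR n - INR k)) * h) with (- (0 + (INR n / 2 - INR k) * h)) by field.
  rewrite f1_opp by auto.
  set (Y := f1 n (0 + (INR n / 2 - INR k) * h)).
  assert (T : (-1) ^ (n - k) * (-1) ^ k = (-1) ^ n).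
  { rewrite <- pow_add. f_equal. lia. }
  pose proof (m1_sq k) as S1.
  assert (T' : (-1) ^ (n - k) = (-1) ^ n * (-1) ^ k).
  { rewrite <- T. rewrite Rmult_assoc, S1. ring. }
  rewrite T'. pose proof (m1_sq n). 
  set (u := (-1) ^ n) in *. set (s := (-1) ^ k) in *.
  replace (u * s * C n k * - (u * Y)) with (- (u * u) * s * C n k * Y) by ring.
  rewrite H. ring.
Qed.

Lemma pow_pred y n : (1 <= n)%nat -> y ^ n = y ^ (n - 1) * y.
Proof. intro hn. replace n with (S (n - 1)) at 1 by lia. simpl. ring. Qed.

Lemma part1 : forall n : nat, (3 <= n)%nat ->
     exists (f : R -> R) (x : R),
       peano_exists (n - 1) f x /\ sym_riemann_exists n f x /\ ~ peano_exists n f x.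
Proof.
  intros n hn. exists (f1 n), 0. split; [|split].
  - exists (fun _ => 0). split. { unfold f1. rewrite Rabs_R0. ring. }
    intros eps epos. exists eps. split; auto. intros h hh hd.
    rewrite (sum_eq _ (fun _ => 0)) by (intros; unfold Rdiv; ring).
    rewrite sum_cte. rewrite Rplus_0_l.
    unfold f1. replace (h ^ (n - 1) * Rabs h - 0 * INR (S (n - 1))) with (h ^ (n-1) * Rabs h) by ring.
    rewrite Rabs_mult, Rabs_Rabsolu, <- RPow_abs.
    assert (0 <= Rabs h ^ (n - 1)) by (apply pow_le; apply Rabs_pos). nra.
  - exists 0. intros eps epos. exists 1. split; [lra|]. intros h _ _.
    rewrite sym_f1 by lia. unfold Rdiv. rewrite Rmult_0_l, Rminus_0_r, Rabs_R0. auto.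
  - apply (peano_fail n (f1 n) 0 1 1 (-1)).
    + lra.
    + intros h _ _. rewrite Rplus_0_l. unfold f1.
      rewrite Rabs_mult, Rabs_Rabsolu, <- RPow_abs.
      rewrite (pow_pred (Rabs h) n) by lia. lra.
    + intros d dpos. exists (d / 2). split; [lra|]. split.
      { rewrite Rabs_pos_eq; lra. }
      rewrite Rplus_0_l. unfold f1. rewrite Rabs_pos_eq by lra.
      rewrite (pow_pred _ n) by lia. ring.
    + intros d dpos. exists (- (d / 2)). split; [lra|]. split.
      { rewrite Rabs_Ropp, Rabs_pos_eq; lra. }
      rewrite Rplus_0_l. unfold f1. rewrite Rabs_Ropp, Rabs_pos_eq by lra.
      rewrite (pow_pred _ n) by lia. ring.
Qed.

Definition T (a b c d : nat) : R := 2 ^ a * 3 ^ b / (2 ^ c * 3 ^ d).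

Lemma odd3 y : exists k, (3 ^ y = 2 * k + 1)%nat.
Proof. induction y as [|y [k Hk]]. - exists 0%nat. reflexivity.
  - exists (3 * k + 1)%nat. rewrite Nat.pow_succ_r'. lia. Qed.

Lemma nat_uniq : forall x y u v, (2 ^ x * 3 ^ y = 2 ^ u * 3 ^ v)%nat -> x = u /\ y = v.
Proof.
  induction x as [|x IH]; intros y u v H; destruct u as [|u].
  - split; auto. simpl in H. apply (Nat.pow_inj_r 3); lia.
  - exfalso. destruct (odd3 y) as [k Hk]. rewrite Nat.pow_succ_r' in H. simpl in H. lia.
  - exfalso. destruct (odd3 v) as [k Hk]. rewrite Nat.pow_succ_r' in H. simpl in H. lia.
  - rewrite !Nat.pow_succ_r' in H. destruct (IH y u v) as [-> ->]; auto. lia.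
Qed.

Lemma INR2 : INR 2 = 2. Proof. simpl. ring. Qed.
Lemma INR3 : INR 3 = 3. Proof. simpl. ring. Qed.

Lemma T_par a b c d a' b' c' d' : T a b c d = T a' b' c' d' ->
  (-1) ^ (a + b + c + d) = (-1) ^ (a' + b' + c' + d').
Proof.
  unfold T. intro H.
  assert (n2 : forall k, 2 ^ k <> 0) by (intro; apply pow_nonzero; lra).
  assert (n3 : forall k, 3 ^ k <> 0) by (intro; apply pow_nonzero; lra).
  assert (H' : 2 ^ (a + c') * 3 ^ (b + d') = 2 ^ (a' + c) * 3 ^ (b' + d)).
  { rewrite !pow_add. apply (f_equal (fun z => z * (2 ^ c * 3 ^ d) * (2 ^ c' * 3 ^ d'))) in H.
    field_simplify in H; auto. lra.
    all: apply Rmult_integral_contrapositive; split; auto. }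
  rewrite <- INR2, <- INR3, <- !pow_INR, <- !mult_INR in H'.
  apply INR_eq in H'. apply nat_uniq in H' as [e1 e2].
  assert (E : forall m, (-1) ^ (2 * m) = 1).
  { intro m. rewrite pow_mult. replace ((-1)^2) with 1 by ring. apply pow1. }
  assert (K : ((a + b + c + d) + 2 * (c' + d') = (a' + b' + c' + d') + 2 * (c + d))%nat) by lia.
  apply (f_equal (fun m => (-1) ^ m)) in K. rewrite (pow_add _ (a + b + c + d)), (pow_add _ (a' + b' + c' + d')), !E in K. lra.
Qed.

Definition inS (h : R) : Prop := exists a b c d, h = T a b c d.

Definition chi (h : R) : R :=
  epsilon (inhabits 0) (fun s => (exists a b c d, h = T a b c d /\ s = (-1) ^ (a + b + c + d))
                                 \/ (~ inS h /\ s = 0)).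

Lemma chi_spec h : (exists a b c d, h = T a b c d /\ chi h = (-1) ^ (a + b + c + d))
                   \/ (~ inS h /\ chi h = 0).
Proof.
  unfold chi. apply epsilon_spec.
  destruct (classic (inS h)) as [[a [b [c [d H]]]]|H].
  - exists ((-1) ^ (a + b + c + d)). left. exists a, b, c, d. auto.
  - exists 0. right. auto.
Qed.

Lemma chi_val a b c d : chi (T a b c d) = (-1) ^ (a + b + c + d).
Proof.
  destruct (chi_spec (T a b c d)) as [[a' [b' [c' [d' [H1 H2]]]]]|[H _]].
  - rewrite H2. apply T_par in H1. auto.
  - exfalso. apply H. exists a, b, c, d. auto.
Qed.

Lemma chi_out h : ~ inS h -> chi h = 0.
Proof.
  intro H. destruct (chi_spec h) as [[a [b [c [d [H1 _]]]]]|[_ H2]]; auto.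
  exfalso. apply H. exists a, b, c, d. auto.
Qed.

Lemma n2 k : 2 ^ k <> 0. Proof. apply pow_nonzero; lra. Qed.
Lemma n3 k : 3 ^ k <> 0. Proof. apply pow_nonzero; lra. Qed.

Lemma chi_mul (m : R) (Hm : m = 2 \/ m = 3) h : chi (m * h) = - chi h.
Proof.
  destruct (classic (inS h)) as [[a [b [c [d H]]]]|H].
  - subst h. destruct Hm as [-> | ->].
    + replace (2 * T a b c d) with (T (S a) b c d).
      2:{ unfold T. simpl. field; repeat split; auto using n2, n3. }
      rewrite !chi_val. simpl. ring.
    + replace (3 * T a b c d) with (T a (S b) c d).
      2:{ unfold T. simpl. field; repeat split; auto using n2, n3. }
      rewrite !chi_val. replace (a + S b + c + d)%nat with (S (a + b + c + d)) by lia. simpl. ring.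
  - rewrite (chi_out h H). rewrite chi_out. ring.
    intros [a [b [c [d E]]]]. apply H. destruct Hm as [-> | ->].
    + exists a, b, (S c), d. unfold T in *. simpl.
      replace h with (2 * h / 2) by field. rewrite E. field; repeat split; auto using n2, n3.
    + exists a, b, c, (S d). unfold T in *. simpl.
      replace h with (3 * h / 3) by field. rewrite E. field; repeat split; auto using n2, n3.
Qed.

Lemma chi_bound h : Rabs (chi h) <= 1.
Proof.
  destruct (chi_spec h) as [[a [b [c [d [_ H]]]]]|[_ H]]; rewrite H.
  - rewrite <- RPow_abs. rewrite Rabs_left by lra. replace (- -1) with 1 by ring. rewrite pow1. lra.
  - rewrite Rabs_R0. lra.
Qed.

Definition f2 (y : R) : R := y ^ 3 * chi y.

Lemma fwd_f2 h : fwd_diff 3 f2 0 h = 0.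
Proof.
  unfold fwd_diff, f2. simpl sum_f_R0.
  assert (C30 : C 3 0 = 1) by (unfold C; simpl; field).
  assert (C31 : C 3 1 = 3) by (unfold C; simpl; field).
  assert (C32 : C 3 2 = 3) by (unfold C; simpl; field).
  assert (C33 : C 3 3 = 1) by (unfold C; simpl; field).
  rewrite C30, C31, C32, C33.
  simpl.
  replace (0 + (1 + 1) * h) with (2 * h) by ring.
  replace (0 + (1 + 1 + 1) * h) with (3 * h) by ring.
  replace (0 + 1 * h) with h by ring.
  rewrite !chi_mul by auto. ring.
Qed.

Lemma small_half : forall d, 0 < d -> exists N : nat, forall n, (n >= N)%nat -> (/ 2) ^ n < d.
Proof.
  intros d dpos. destruct (pow_lt_1_zero (/ 2) ltac:(rewrite Rabs_pos_eq; lra) d dpos) as [N HN].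
  exists N. intros n hn. specialize (HN n hn). rewrite Rabs_pos_eq in HN; auto.
  apply pow_le; lra.
Qed.

Lemma T_half c : T 0 0 c 0 = (/ 2) ^ c.
Proof. unfold T. rewrite pow_inv. simpl. field. apply n2. Qed.

Lemma part2 : exists (f : R -> R) (x : R),
       peano_exists 2 f x /\ riemann_exists 3 f x /\ ~ peano_exists 3 f x.
Proof.
  exists f2, 0. split; [|split].
  - exists (fun _ => 0). split. { unfold f2. simpl. ring. }
    intros eps epos. exists eps. split; auto. intros h hh hd.
    rewrite (sum_eq _ (fun _ => 0)) by (intros; unfold Rdiv; ring).
    rewrite sum_cte. rewrite Rplus_0_l. unfold f2.
    replace (h ^ 3 * chi h - 0 * INR 3) with (h ^ 3 * chi h) by ring.
    rewrite Rabs_mult, <- RPow_abs.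
    pose proof (chi_bound h). pose proof (Rabs_pos h). pose proof (Rabs_pos (chi h)).
    simpl. set (a := Rabs h) in *. set (q := Rabs (chi h)) in *.
    assert (0 <= a * a) by nra.
    assert (0 <= a * (a * a)) by (apply Rmult_le_pos; lra).
    assert (a * (a * a) * q <= a * (a * a) * 1) by (apply Rmult_le_compat_l; lra).
    assert (a * (a * (a * 1)) * q <= a * (a * a)) by lra.
    assert (a * (a * a) <= eps * (a * a)) by (apply Rmult_le_compat_r; lra).
    lra.
  - exists 0. intros eps epos. exists 1. split; [lra|]. intros h _ _.
    rewrite fwd_f2. unfold Rdiv. rewrite Rmult_0_l, Rminus_0_r, Rabs_R0. auto.
  - apply (peano_fail 3 f2 0 1 1 (-1)).
    + lra.
    + intros h _ _. rewrite Rplus_0_l. unfold f2.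
      rewrite Rabs_mult, <- RPow_abs.
      pose proof (chi_bound h). pose proof (Rabs_pos h). pose proof (Rabs_pos (chi h)).
      assert (0 <= Rabs h ^ 3) by (apply pow_le; auto). nra.
    + intros d dpos. destruct (small_half d dpos) as [N HN].
      exists (T 0 0 (2 * N) 0). rewrite T_half.
      assert (0 < (/2) ^ (2 * N)) by (apply pow_lt; lra).
      split; [lra|]. split. { rewrite Rabs_pos_eq by lra. apply HN. lia. }
      rewrite Rplus_0_l. unfold f2. rewrite <- T_half, chi_val.
      replace (0 + 0 + 2 * N + 0)%nat with (2 * N)%nat by lia.
      rewrite pow_mult. replace ((-1) ^ 2) with 1 by ring. rewrite pow1. ring.
    + intros d dpos. destruct (small_half d dpos) as [N HN].
      exists (T 0 0 (S (2 * N)) 0). rewrite T_half.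
      assert (0 < (/2) ^ (S (2 * N))) by (apply pow_lt; lra).
      split; [lra|]. split. { rewrite Rabs_pos_eq by lra. apply HN. lia. }
      rewrite Rplus_0_l. unfold f2. rewrite <- T_half, chi_val.
      replace (0 + 0 + S (2 * N) + 0)%nat with (S (2 * N))%nat by lia.
      rewrite <- (tech_pow_Rmult (-1)).
      rewrite pow_mult. replace ((-1) ^ 2) with 1 by ring. rewrite pow1. ring.
Qed.

Theorem theorem1 :
  (forall n : nat, (3 <= n)%nat ->
     exists (f : R -> R) (x : R),
       peano_exists (n - 1) f x /\ sym_riemann_exists n f x /\ ~ peano_exists n f x) /\
  (exists (f : R -> R) (x : R),
       peano_exists 2 f x /\ riemann_exists 3 f x /\ ~ peano_exists 3 f x).
Proof. split. exact part1. exact part2. Qed.
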